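(* Let $\Sigma$ be a finite alphabet, $m,n$ positive integers with $m\le n$, and $r$ an $(m,n)$-ranker. There is a sentence $\varphi_r\in\mathrm{FO}^2_{m,n}[<]$ such that for all $w\in\Sigma^\star$, $w\models\varphi_r$ iff $r(w)$ is defined.
   Context: Words are finite structures with universe $\{1,\dots,|w|\}$, unary predicates $Q_a$ ($a\in\Sigma$) marking positions carrying $a$, and the order $<$. $\mathrm{FO}^2_n[<]$ is first-order logic over this signature using only the variables $x,y$, with quantifier depth at most $n$; $\mathrm{FO}^2_{m,n}[<]$ is the set of its formulas in which every path in the parse tree has at most $m$ blocks of alternating quantifiers. Boundary positions: $\triangleright_a(w)=\min\{i:w_i=a\}$, $\triangleleft_a(w)=\max\{i:w_i=a\}$, $\triangleright_a(w,q)=\min\{i\in[q+1,|w|]:w_i=a\}$, $\triangleleft_a(w,q)=\max\{i\in[1,q-1]:w_i=a\}$ (undefined if empty); $\triangleright,\triangleleft$ are directions. An $n$-ranker is a sequence $r=(p_1,\dots,p_n)$ of boundary positions with $r(w)=p_1(w)$ if $n=1$, undefined if $(p_1,\dots,p_{n-1})(w)$ is undefined, else $p_n(w,(p_1,\dots,p_{n-1})(w))$. An $(m,n)$-ranker is an $n$-ranker whose sequence of directions consists of exactly $m$ maximal blocks of equal direction. *)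

(* Defs.v *)
From mathcomp Require Import all_boot.
Set Implicit Arguments. Unset Strict Implicit. Unset Printing Implicit Defensive.

(* A word over Sigma is a seq Sigma; positions are 1..size w (1-indexed as in
   the paper); [letter w i a] holds iff position i exists and carries a. *)
Definition letter (Sigma : finType) (w : seq Sigma) (i : nat) (a : Sigma) : bool :=
  (nth None (map Some w) i.-1 == Some a) && (0 < i).

Inductive var := VX | VY.

Inductive form (Sigma : Type) :=
| FTrue | FFalse
| FLetter (a : Sigma) (v : var)
| FNLetter (a : Sigma) (v : var)
| FLt (u v : var)
| FNLt (u v : var)
| FEq (u v : var)
| FNEq (u v : var)
| FAnd (f g : form Sigma)
| FOr (f g : form Sigma)
| FEx (v : var) (f : form Sigma)
| FAll (v : var) (f : form Sigma).

Arguments FTrue {Sigma}. Arguments FFalse {Sigma}.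

Definition var_eqb (u v : var) : bool :=
  match u, v with VX, VX | VY, VY => true | _, _ => false end.

Fixpoint free (Sigma : Type) (v : var) (f : form Sigma) : bool :=
  match f with
  | FTrue | FFalse => false
  | FLetter _ u | FNLetter _ u => var_eqb u v
  | FLt u1 u2 | FNLt u1 u2 | FEq u1 u2 | FNEq u1 u2 => var_eqb u1 v || var_eqb u2 v
  | FAnd g h | FOr g h => free v g || free v h
  | FEx u g | FAll u g => ~~ var_eqb u v && free v g
  end.

Definition sentence (Sigma : Type) (f : form Sigma) : bool :=
  ~~ free VX f && ~~ free VY f.

Fixpoint qdepth (Sigma : Type) (f : form Sigma) : nat :=
  match f with
  | FAnd g h | FOr g h => maxn (qdepth g) (qdepth h)
  | FEx _ g | FAll _ g => (qdepth g).+1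
  | _ => 0
  end.

(* Number of blocks of alternating quantifiers along parse-tree paths.
   [prev] is the kind of the last quantifier met on the path (None: none yet,
   Some true: existential, Some false: universal). *)
Fixpoint qblocks_aux (Sigma : Type) (prev : option bool) (f : form Sigma) : nat :=
  match f with
  | FAnd g h | FOr g h => maxn (qblocks_aux prev g) (qblocks_aux prev h)
  | FEx _ g => (prev != Some true) + qblocks_aux (Some true) g
  | FAll _ g => (prev != Some false) + qblocks_aux (Some false) g
  | _ => 0
  end.

Definition qblocks (Sigma : Type) (f : form Sigma) : nat := qblocks_aux None f.

Definition in_FO2 (Sigma : Type) (m n : nat) (f : form Sigma) : bool :=
  (qdepth f <= n) && (qblocks f <= m).

Definition lookup (v : var) (ix iy : nat) : nat :=
  match v with VX => ix | VY => iy end.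

Fixpoint sat (Sigma : finType) (w : seq Sigma) (ix iy : nat) (f : form Sigma) : Prop :=
  match f with
  | FTrue => True
  | FFalse => False
  | FLetter a v => letter w (lookup v ix iy) a
  | FNLetter a v => ~~ letter w (lookup v ix iy) a
  | FLt u v => lookup u ix iy < lookup v ix iy
  | FNLt u v => ~~ (lookup u ix iy < lookup v ix iy)
  | FEq u v => lookup u ix iy = lookup v ix iy
  | FNEq u v => lookup u ix iy <> lookup v ix iy
  | FAnd g h => sat w ix iy g /\ sat w ix iy h
  | FOr g h => sat w ix iy g \/ sat w ix iy h
  | FEx VX g => exists i, 1 <= i <= size w /\ sat w i iy g
  | FEx VY g => exists i, 1 <= i <= size w /\ sat w ix i g
  | FAll VX g => forall i, 1 <= i <= size w -> sat w i iy g
  | FAll VY g => forall i, 1 <= i <= size w -> sat w ix i g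
  end.

(* w |= phi (for a sentence the initial assignment is irrelevant). *)
Definition models (Sigma : finType) (w : seq Sigma) (f : form Sigma) : Prop :=
  sat w 0 0 f.

(* Right = the direction |> (min), Left = the direction <| (max). *)
Inductive dir := Right | Left.

Definition dir_eqb (d e : dir) : bool :=
  match d, e with Right, Right | Left, Left => true | _, _ => false end.

Definition bpos (Sigma : Type) := (dir * Sigma)%type.

Definition positions_of (Sigma : finType) (w : seq Sigma) (a : Sigma) (s : seq nat) :=
  [seq i <- s | letter w i a].

Definition bp_abs (Sigma : finType) (p : bpos Sigma) (w : seq Sigma) : option nat :=
  let s := positions_of w p.2 (iota 1 (size w)) in
  match p.1 with
  | Right => ohead s
  | Left => ohead (rev s)
  end.

Definition bp_rel (Sigma : finType) (p : bpos Sigma) (w : seq Sigma) (q : nat)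
  : option nat :=
  match p.1 with
  | Right => ohead (positions_of w p.2 (iota q.+1 (size w - q)))
  | Left => ohead (rev (positions_of w p.2 (iota 1 q.-1)))
  end.

(* r(w) for a ranker r (a nonempty sequence of boundary positions);
   None means "undefined". *)
Definition ranker_eval (Sigma : finType) (r : seq (bpos Sigma)) (w : seq Sigma)
  : option nat :=
  match r with
  | [::] => None
  | p :: rs => foldl (fun acc q => obind (bp_rel q w) acc) (bp_abs p w) rs
  end.

Fixpoint dblocks_aux (prev : dir) (s : seq dir) : nat :=
  match s with
  | [::] => 1
  | d :: s' => (~~ dir_eqb d prev) + dblocks_aux d s'
  end.

Definition dblocks (s : seq dir) : nat :=
  match s with [::] => 0 | d :: s' => dblocks_aux d s' end.

Definition is_mn_ranker (Sigma : Type) (m n : nat) (r : seq (bpos Sigma)) : bool :=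
  (size r == n) && (dblocks [seq p.1 | p <- r] == m).

(* Main.v *)
Require Import Defs.
From mathcomp Require Import all_boot zify.
From Stdlib Require Import Classical.
Set Implicit Arguments. Unset Strict Implicit.

Fixpoint fneg (Sigma : Type) (f : form Sigma) : form Sigma :=
 match f with
 | @FTrue _ => FFalse | @FFalse _ => FTrue
 | @FLetter _ a v => FNLetter a v | @FNLetter _ a v => FLetter a v
 | @FLt _ u v => FNLt Sigma u v | @FNLt _ u v => FLt Sigma u v
 | @FEq _ u v => FNEq Sigma u v | @FNEq _ u v => FEq Sigma u v
 | @FAnd _ f g => FOr (fneg f) (fneg g) | @FOr _ f g => FAnd (fneg f) (fneg g)
 | @FEx _ v f => FAll v (fneg f) | @FAll _ v f => FEx v (fneg f) end.

Lemma sat_neg (Sigma : finType) (w : seq Sigma) (f : form Sigma) ix iy :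
  sat w ix iy (fneg f) <-> ~ sat w ix iy f.
Proof.
elim: f ix iy => [||a v|a v|u v|u v|u v|u v|f IHf g IHg|f IHf g IHg|v f IHf|v f IHf] ix iy /=.
- tauto.
- tauto.
- by case: (letter _ _ _); split.
- by case: (letter _ _ _); split.
- by case: (_ < _); split.
- by case: (_ < _); split.
- tauto.
- split; [tauto|]; move=> H; apply: NNPP => H'; exact: H.
- rewrite IHf IHg; tauto.
- rewrite IHf IHg; split; [tauto|]. move=> H; split; move=> H'; apply: H; tauto.
- case: v => /=; setoid_rewrite IHf; firstorder.
- case: v => /=; setoid_rewrite IHf; split.
  + firstorder.
  + move=> H; apply: NNPP => H'; apply: H => i Hi; apply: NNPP => H2; apply: H'; exists i; split=> //.
  + firstorder.
  + move=> H; apply: NNPP => H'; apply: H => i Hi; apply: NNPP => H2; apply: H'; exists i; split=> //.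
Qed.

Lemma free_neg (Sigma : Type) (v : var) (f : form Sigma) : free v (fneg f) = free v f.
Proof. by elim: f => //= [f -> g ->|f -> g ->|u f ->|u f ->]. Qed.

Lemma qdepth_neg (Sigma : Type) (f : form Sigma) : qdepth (fneg f) = qdepth f.
Proof. by elim: f => //= [f -> g ->|f -> g ->|u f ->|u f ->]. Qed.

Lemma qb_neg (Sigma : Type) (f : form Sigma) p :
  qblocks_aux (omap negb p) (fneg f) = qblocks_aux p f.
Proof.
elim: f p => //= [f IHf g IHg|f IHf g IHg|u f IHf|u f IHf] p; rewrite ?IHf ?IHg //.
- have -> : (omap negb p != Some false) = (p != Some true) by case: p => [[]|].
  by rewrite -(IHf (Some true)).
- have -> : (omap negb p != Some true) = (p != Some false) by case: p => [[]|].
  by rewrite -(IHf (Some false)).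
Qed.

Lemma qb_le (Sigma : Type) (f : form Sigma) p p' :
  qblocks_aux p f <= (qblocks_aux p' f).+1.
Proof.
elim: f p p' => //= [f IHf g IHg|f IHf g IHg|u f IHf|u f IHf] p p'.
- rewrite geq_max; apply/andP; split.
  + apply: leq_trans (IHf p p') _; by rewrite ltnS leq_max leqnn.
  + apply: leq_trans (IHg p p') _; by rewrite ltnS leq_max leqnn orbT.
- rewrite geq_max; apply/andP; split.
  + apply: leq_trans (IHf p p') _; by rewrite ltnS leq_max leqnn.
  + apply: leq_trans (IHg p p') _; by rewrite ltnS leq_max leqnn orbT.
- move: (p != _) (p' != _) => [] [] /=; lia.
- move: (p != _) (p' != _) => [] [] /=; lia.
Qed.

Lemma letter_range (Sigma : finType) (w : seq Sigma) i a :
  letter w i a -> 0 < i <= size w.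
Proof.
rewrite /letter => /andP [H ->] /=.
case: (ltnP i.-1 (size w)) => [|Hle]; first by case: i {H}.
by rewrite nth_default ?size_map in H.
Qed.

Lemma ohead_min (p : pred nat) l x : sorted ltn l ->
  ohead [seq i <- l | p i] = Some x ->
  [/\ x \in l, p x & forall y, y \in l -> p y -> x <= y].
Proof.
move=> sl; case E: [seq i <- l | p i] => [|h t] //= [<-].
have : h \in [seq i <- l | p i] by rewrite E mem_head.
rewrite mem_filter => /andP [ph hl]; split=> // y yl py.
have : y \in h :: t by rewrite -E mem_filter py yl.
rewrite in_cons => /predU1P [->//|yt].
have st : sorted ltn (h :: t) by rewrite -E; apply: sorted_filter => //; exact: ltn_trans.
have := order_path_min ltn_trans st => /allP /(_ _ yt); exact: ltnW.
Qed.

Lemma ohead_max (p : pred nat) l x : sorted ltn l ->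
  ohead (rev [seq i <- l | p i]) = Some x ->
  [/\ x \in l, p x & forall y, y \in l -> p y -> y <= x].
Proof.
move=> sl; case E: (rev [seq i <- l | p i]) => [|h t] //= [<-].
have : h \in [seq i <- l | p i] by rewrite -mem_rev E mem_head.
rewrite mem_filter => /andP [ph hl]; split=> // y yl py.
have : y \in h :: t by rewrite -E mem_rev mem_filter py yl.
rewrite in_cons => /predU1P [->//|yt].
have st : sorted (fun a b => b < a) (h :: t).
  by rewrite -E rev_sorted; apply: sorted_filter => //; exact: ltn_trans.
have tr : transitive (fun a b : nat => b < a) by move=> a b c H1 H2; exact: ltn_trans H2 H1.
have := order_path_min tr st => /allP /(_ _ yt); exact: ltnW.
Qed.

Lemma ohead_some (p : pred nat) l y : y \in l -> p y -> ohead [seq i <- l | p i] <> None.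
Proof.
move=> yl py; have : has p l by apply/hasP; exists y.
by rewrite has_filter; case: [seq i <- l | p i].
Qed.

Lemma ohead_rev_some (p : pred nat) l y : y \in l -> p y -> ohead (rev [seq i <- l | p i]) <> None.
Proof.
move=> yl py; have : has p l by apply/hasP; exists y.
by rewrite has_filter; case: [seq i <- l | p i] => // a s _; rewrite rev_cons; case: (rev s).
Qed.

Definition cmp (d : dir) (q i : nat) : bool := if d is Right then q < i else i < q.
Definition cmpe (d : dir) (q i : nat) : bool := if d is Right then q <= i else i <= q.

Lemma bp_rel_some (Sigma : finType) (d : dir) (a : Sigma) w q x :
  bp_rel (d, a) w q = Some x ->
  [/\ letter w x a, cmp d q x & forall u, letter w u a -> cmp d q u -> cmpe d x u].
Proof.
rewrite /bp_rel /positions_of; case: d => /= H.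
- have [xin px hmin] := ohead_min (iota_ltn_sorted _ _) H.
  move: xin; rewrite mem_iota => xin.
  split=> //; first lia.
  move=> u lu qu; apply: hmin => //; rewrite mem_iota; have := letter_range lu; lia.
- have [xin px hmin] := ohead_max (iota_ltn_sorted _ _) H.
  move: xin; rewrite mem_iota => xin.
  split=> //; first lia.
  move=> u lu qu; apply: hmin => //; rewrite mem_iota; have := letter_range lu; lia.
Qed.

Lemma bp_rel_none (Sigma : finType) (d : dir) (a : Sigma) w q u :
  letter w u a -> cmp d q u -> bp_rel (d, a) w q <> None.
Proof.
rewrite /bp_rel /positions_of => lu; have := letter_range lu; case: d => /= ur qu.
- by apply: (ohead_some (y := u)) => //; rewrite mem_iota; lia.
- by apply: (ohead_rev_some (y := u)) => //; rewrite mem_iota; lia.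
Qed.

Definition ov (v : var) : var := match v with VX => VY | VY => VX end.
Definition rel_f (Sigma : Type) (d : dir) (u v : var) : form Sigma :=
  if d is Right then FLt Sigma u v else FLt Sigma v u.

Definition stepP (Sigma : Type) (d : dir) (D : form Sigma) (A B : var -> form Sigma)
  (d' : dir) (u : var) : form Sigma :=
  if dir_eqb d' d then A u else FAnd D (fneg (B u)).
Definition nD (Sigma : Type) (a : Sigma) (P : var -> form Sigma) : form Sigma :=
  FEx VX (FAnd (FLetter a VX) (P VX)).
Definition nA (Sigma : Type) (d' : dir) (a : Sigma) (P : var -> form Sigma) (v : var) : form Sigma :=
  FEx (ov v) (FAnd (rel_f Sigma d' (ov v) v) (FAnd (FLetter a (ov v)) (P (ov v)))).
Definition nB (Sigma : Type) (d' : dir) (a : Sigma) (P : var -> form Sigma) (v : var) : form Sigma :=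
  FEx (ov v) (FAnd (FOr (rel_f Sigma d' (ov v) v) (FEq Sigma (ov v) v))
                   (FAnd (FLetter a (ov v)) (P (ov v)))).

Fixpoint build (Sigma : Type) (d : dir) (D : form Sigma) (A B : var -> form Sigma)
  (rs : seq (bpos Sigma)) : form Sigma :=
  match rs with
  | [::] => D
  | p :: rs' =>
     let P := stepP d D A B p.1 in
     build p.1 (nD p.2 P) (nA p.1 p.2 P) (nB p.1 p.2 P) rs'
  end.

Lemma build_syn (Sigma : Type) (rs : seq (bpos Sigma)) d D A B c k :
  qblocks_aux (Some true) D <= c -> (forall v, qblocks_aux (Some true) (A v) <= c) ->
  (forall v, qblocks_aux (Some true) (B v) <= c) ->
  qdepth D <= k -> (forall v, qdepth (A v) <= k) -> (forall v, qdepth (B v) <= k) ->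
  ~~ free VX D -> ~~ free VY D -> (forall v, ~~ free (ov v) (A v)) ->
  (forall v, ~~ free (ov v) (B v)) ->
  [/\ (qblocks_aux (Some true) (build d D A B rs)).+1 <= c + dblocks_aux d [seq p.1 | p <- rs],
      qdepth (build d D A B rs) <= k + size rs,
      ~~ free VX (build d D A B rs) & ~~ free VY (build d D A B rs)].
Proof.
elim: rs d D A B c k => [|[d' a] rs IH] d D A B c k hD hA hB dD dA dB fX fY fA fB /=.
  by split=> //; rewrite ?addn0 ?addn1 ?ltnS.
set P := stepP d D A B d'.
have hP : forall u, qblocks_aux (Some true) (P u) <= c + ~~ dir_eqb d' d.
  move=> u; rewrite /P /stepP; case: (dir_eqb d' d) => /=; first by rewrite addn0.
  rewrite geq_max; apply/andP; split; first by rewrite addn1 ltnW // ltnS.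
  have := qb_neg (B u) (Some false); rewrite /= => ->.
  apply: leq_trans (qb_le _ _ (Some true)) _; by rewrite addn1 ltnS.
have dP : forall u, qdepth (P u) <= k.
  move=> u; rewrite /P /stepP; case: (dir_eqb d' d) => //=.
  by rewrite geq_max dD qdepth_neg dB.
have fP : forall u v, ~~ free v D -> ~~ free (ov u) (P u).
  move=> u v _; rewrite /P /stepP; case: (dir_eqb d' d) => //=.
  rewrite free_neg negb_or fB andbT.
  by case: u => /=.
have er : forall u v, qblocks_aux (Some true) (@rel_f Sigma d' u v) = 0 by rewrite /rel_f; case: (d').
have dr : forall u v, qdepth (@rel_f Sigma d' u v) = 0 by rewrite /rel_f; case: (d').
have s1 : qblocks_aux (Some true) (nD a P) <= c + ~~ dir_eqb d' d.
  by rewrite /nD /= add0n max0n.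
have s2 : forall v, qblocks_aux (Some true) (nA d' a P v) <= c + ~~ dir_eqb d' d.
  by move=> v; rewrite /nA /= add0n er !max0n; exact: hP.
have s3 : forall v, qblocks_aux (Some true) (nB d' a P v) <= c + ~~ dir_eqb d' d.
  by move=> v; rewrite /nB /= add0n er !max0n; exact: hP.
have s4 : qdepth (nD a P) <= k.+1 by rewrite /nD /= max0n ltnS; exact: dP.
have s5 : forall v, qdepth (nA d' a P v) <= k.+1.
  by move=> v; rewrite /nA /= dr !max0n ltnS; exact: dP.
have s6 : forall v, qdepth (nB d' a P v) <= k.+1.
  by move=> v; rewrite /nB /= dr !max0n ?maxn0 ltnS; exact: dP.
have s7 : ~~ free VX (nD a P) by [].
have s8 : ~~ free VY (nD a P) by rewrite /nD /=; exact: (fP VX VX fX).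
have s9 : forall v, ~~ free (ov v) (nA d' a P v) by move=> v; rewrite /nA /=; case: v.
have s10 : forall v, ~~ free (ov v) (nB d' a P v) by move=> v; rewrite /nB /=; case: v.
have [h1 h2 h3 h4] := IH d' _ _ _ _ _ s1 s2 s3 s4 s5 s6 s7 s8 s9 s10.
split=> //.
- by apply: leq_trans h1 _; rewrite addnA.
- by rewrite addnS -addSn.
Qed.

Definition Inv (Sigma : finType) (w : seq Sigma) (d : dir) (D : form Sigma)
  (A B : var -> form Sigma) (o : option nat) : Prop :=
  [/\ (forall ix iy, sat w ix iy D <-> o <> None),
      (forall v ix iy, 0 < lookup v ix iy <= size w ->
        (sat w ix iy (A v) <-> exists q, o = Some q /\ cmp d q (lookup v ix iy)))
    & (forall v ix iy, 0 < lookup v ix iy <= size w ->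
        (sat w ix iy (B v) <-> exists q, o = Some q /\ cmpe d q (lookup v ix iy)))].

Lemma key (Sigma : finType) (w : seq Sigma) d' a o (R : nat -> Prop) :
  (forall j x, R j -> cmpe d' x j -> R x) ->
  ((exists j, 0 < j <= size w /\ R j /\ letter w j a /\ exists q, o = Some q /\ cmp d' q j)
   <-> (exists x, obind (bp_rel (d', a) w) o = Some x /\ R x)).
Proof.
move=> mono; split.
- move=> [j [jr [Rj [lj [q [-> qj]]]]]] /=.
  case E: (bp_rel (d', a) w q) => [x|]; last by have := bp_rel_none lj qj; rewrite E.
  have [lx qx hmin] := bp_rel_some E.
  exists x; split=> //; exact: mono Rj (hmin _ lj qj).
- case: o => [q|] [x] [E Rx] //=.
  have [lx qx hmin] := bp_rel_some E.
  exists x; split; first exact: letter_range lx.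
  split; first exact: Rx.
  split; first exact: lx.
  by exists q.
Qed.

Lemma rel_sem (Sigma : finType) (w : seq Sigma) d u v ix iy :
  sat w ix iy (rel_f Sigma d u v) <-> cmp d (lookup u ix iy) (lookup v ix iy).
Proof. by case: d. Qed.

Lemma switch_cmp d d' q j : dir_eqb d' d = false -> ((~ cmpe d q j) <-> cmp d' q j).
Proof.
case: d; case: d' => //= _; split; lia.
Qed.

Lemma gen (Sigma : finType) (w : seq Sigma) d' a o (R S : nat -> Prop) :
  (forall j x, R j -> cmpe d' x j -> R x) ->
  (forall j, 0 < j <= size w ->
     (S j <-> R j /\ letter w j a /\ exists q, o = Some q /\ cmp d' q j)) ->
  ((exists j, 0 < j <= size w /\ S j) <-> (exists x, obind (bp_rel (d', a) w) o = Some x /\ R x)).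
Proof.
move=> mono hS; rewrite -(key w a o mono); split.
- by move=> [j [jr Sj]]; exists j; split=> //; apply/hS.
- by move=> [j [jr H]]; exists j; split=> //; apply/hS.
Qed.

Lemma step_inv (Sigma : finType) (w : seq Sigma) d D A B o d' (a : Sigma) :
  Inv w d D A B o ->
  let P := stepP d D A B d' in
  Inv w d' (nD a P) (nA d' a P) (nB d' a P) (obind (bp_rel (d', a) w) o).
Proof.
move=> [hD hA hB] P.
have hP : forall u ix iy, 0 < lookup u ix iy <= size w ->
    (sat w ix iy (P u) <-> exists q, o = Some q /\ cmp d' q (lookup u ix iy)).
  move=> u ix iy ur; rewrite /P /stepP.
  case E: (dir_eqb d' d).
    have -> : d' = d by move: E; case: (d); case: (d').
    exact: hA.
  rewrite /= sat_neg hD hB //.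
  case: (o) => [q|] /=; last by split=> [[]|[q []]].
  split.
  + move=> [_ H]; exists q; split=> //; apply/(switch_cmp _ _ E) => H'; apply: H; by exists q.
  + move=> [q' [[<-] H]]; split=> // [[q'' [[<-] H']]]; move: H'; exact/(switch_cmp _ _ E).
have monoT : forall j x, (fun _ : nat => True) j -> cmpe d' x j -> (fun _ => True) x by [].
split.
- move=> ix iy; rewrite /nD /=.
  have -> : (obind (bp_rel (d', a) w) o <> None) <->
            exists x, obind (bp_rel (d', a) w) o = Some x /\ (fun _ => True) x.
    case: (obind _ _) => [x|]; split.
    + by move=> _; exists x.
    + by [].
    + by move=> H; exfalso; exact: H.
    + by case=> ? [].
  apply: (gen (S := fun j => letter w j a /\ sat w j iy (P VX))) monoT _ => j jr.
  by rewrite (hP VX j iy jr); split=> [[? ?]|[_ [? ?]]].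
- move=> v ix iy vr.
  have mono : forall j x, (fun j => cmp d' j (lookup v ix iy)) j -> cmpe d' x j ->
                (fun j => cmp d' j (lookup v ix iy)) x.
    by move=> j x; case: (d') => /=; lia.
  case: v vr mono => /= vr mono.
  + apply: (gen (S := fun j => sat w ix j (rel_f Sigma d' VY VX) /\ letter w j a /\ sat w ix j (P VY))) mono _ => j jr.
    by rewrite rel_sem (hP VY ix j jr).
  + apply: (gen (S := fun j => sat w j iy (rel_f Sigma d' VX VY) /\ letter w j a /\ sat w j iy (P VX))) mono _ => j jr.
    by rewrite rel_sem (hP VX j iy jr).
- move=> v ix iy vr.
  have mono : forall j x, (fun j => cmpe d' j (lookup v ix iy)) j -> cmpe d' x j ->
                (fun j => cmpe d' j (lookup v ix iy)) x.
    by move=> j x; case: (d') => /=; lia.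
  have eo : forall j i, (cmp d' j i \/ j = i) <-> cmpe d' j i.
    by move=> j i; case: (d') => /=; split; lia.
  case: v vr mono => /= vr mono.
  + apply: (gen (S := fun j => (sat w ix j (rel_f Sigma d' VY VX) \/ j = ix) /\ letter w j a /\ sat w ix j (P VY))) mono _ => j jr.
    by rewrite rel_sem (hP VY ix j jr) /= eo.
  + apply: (gen (S := fun j => (sat w j iy (rel_f Sigma d' VX VY) \/ j = iy) /\ letter w j a /\ sat w j iy (P VX))) mono _ => j jr.
    by rewrite rel_sem (hP VX j iy jr) /= eo.
Qed.

Lemma build_sem (Sigma : finType) (w : seq Sigma) rs d D A B o :
  Inv w d D A B o -> forall ix iy,
  sat w ix iy (build d D A B rs) <->
  foldl (fun acc q => obind (bp_rel q w) acc) o rs <> None.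
Proof.
elim: rs d D A B o => [|[d' a] rs IH] d D A B o hI ix iy /=.
  by case: hI.
by apply: IH; apply: step_inv.
Qed.

Lemma bp_abs_rel (Sigma : finType) (p : bpos Sigma) w :
  bp_abs p w = bp_rel p w (if p.1 is Right then 0 else (size w).+1).
Proof. by case: p => [[] a]; rewrite /bp_abs /bp_rel /= ?subn0. Qed.

Lemma init_inv (Sigma : finType) (w : seq Sigma) d :
  Inv w d FTrue (fun _ => FTrue) (fun _ => FTrue)
      (Some (if d is Right then 0 else (size w).+1)).
Proof.
split.
- by move=> ix iy /=.
- move=> v ix iy vr /=; split=> // _; eexists; split; first reflexivity.
  by case: d => /=; lia.
- move=> v ix iy vr /=; split=> // _; eexists; split; first reflexivity.
  by case: d => /=; lia.
Qed.

Unset Implicit Arguments.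
Set Strict Implicit.

Theorem lemma4p3 (Sigma : finType) (m n : nat) (r : seq (bpos Sigma)) :
  0 < m -> m <= n -> is_mn_ranker m n r ->
  exists phi : form Sigma,
    sentence phi /\ in_FO2 m n phi /\
    forall w : seq Sigma, models w phi <-> ranker_eval r w <> None.
Proof.
move=> m0 mn /andP [/eqP sz /eqP db].
case: r sz db => [|p rs] sz db; first by rewrite /= in sz; lia.
exists (build p.1 FTrue (fun _ => FTrue) (fun _ => FTrue) (p :: rs)).
have [h1 h2 h3 h4] := @build_syn Sigma (p :: rs) p.1 FTrue (fun _ => FTrue) (fun _ => FTrue) 0 0
  (leqnn 0) (fun _ => leqnn 0) (fun _ => leqnn 0) (leqnn 0) (fun _ => leqnn 0) (fun _ => leqnn 0)
  isT isT (fun _ => isT) (fun _ => isT).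
split; first by rewrite /sentence h3 h4.
split.
- rewrite /in_FO2; apply/andP; split; first by rewrite -sz.
  rewrite /qblocks; apply: leq_trans (qb_le _ None (Some true)) _.
  apply: leq_trans h1 _.
  rewrite -db /= add0n.
  have -> : dir_eqb p.1 p.1 by case: (p.1).
  by [].
- move=> w; rewrite /models (build_sem (p :: rs) (init_inv w p.1)) /ranker_eval /= bp_abs_rel.
  by [].
Qed.
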